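(* Let $\mathbf{x}$ be a feasible solution of $\textsc{Dir-MC-Rel}$ and let $\theta$ be chosen uniformly at random from $(0,1)$. Then for every edge $e\in E$, $\Pr[e\in C(\theta)]\le 2x_e$.
   Context: $G=(V,E)$ is a directed graph with non-negative edge weights $w_e$ and distinct terminals $s_1,\dots,s_k$, $k\ge2$. For $i\neq j$, $\mathcal{P}_{ij}$ is the set of directed paths from $s_i$ to $s_j$ in $G$. $\textsc{Dir-MC-Rel}$: minimize $\sum_e w_e x_e$ s.t. $\sum_{e\in p}x_e\ge1$ for all $p\in\mathcal{P}_{ij}$, $i\ne j$, and $x\ge0$. Given feasible $\mathbf{x}$, form $G^+$ by adding new vertices $t_1,\dots,t_k$ and new edges $(t_i,s_j)$ for all $i\neq j$, each with $x$-value $0$. For vertices $u,v$ of $G^+$, $d(u,v)$ is the length of a shortest directed path from $u$ to $v$ in $G^+$ with edge lengths $\mathbf{x}$ ($+\infty$ if none). $B(v,r)=\{u: d(v,u)\le r\}$. For a vertex set $A$, $\delta^+(A)$ is the set of edges of $G^+$ with tail in $A$ and head not in $A$. For $\theta\in(0,1)$, $C(\theta)=\bigcup_{i=1}^k\delta^+(B(t_i,\theta))$. *)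

(* Defs.v *)
(* real numbers, Riemann integral for the probability over uniform theta. *)
From Stdlib Require Import Reals List Classical ClassicalEpsilon.
Open Scope R_scope.

Fixpoint is_walk {W F : Type} (tl hd : F -> W) (a b : W) (p : list F) : Prop :=
  match p with
  | nil => a = b
  | e :: p' => tl e = a /\ is_walk tl hd (hd e) b p'
  end.

Definition is_path {W F : Type} (tl hd : F -> W) (a b : W) (p : list F) : Prop :=
  is_walk tl hd a b p /\ NoDup (a :: map hd p).

Definition plen {F : Type} (l : F -> R) (p : list F) : R :=
  fold_right (fun e acc => l e + acc) 0 p.

Definition is_dist {W F : Type} (tl hd : F -> W) (l : F -> R) (a b : W) (m : R) : Prop :=
  (exists p, is_path tl hd a b p /\ plen l p = m) /\
  (forall p, is_path tl hd a b p -> m <= plen l p).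

(* u in B(a, r), i.e. d(a,u) <= r  (d = +infinity when no path exists) *)
Definition in_ball {W F : Type} (tl hd : F -> W) (l : F -> R) (a : W) (r : R) (u : W) : Prop :=
  exists m, is_dist tl hd l a u m /\ m <= r.

Definition feasible {V E : Type} (tail head : E -> V) (k : nat) (s : nat -> V)
  (x : E -> R) : Prop :=
  (forall e, 0 <= x e) /\
  (forall i j, (i < k)%nat -> (j < k)%nat -> i <> j ->
     forall p, is_path tail head (s i) (s j) p -> 1 <= plen x p).

Definition term (k : nat) := { i : nat | (i < k)%nat }.

(* vertices of G+: V plus new vertices t_0..t_{k-1} *)
Definition Vplus (V : Type) (k : nat) := (V + term k)%type.

(* new edges (t_i, s_j), i <> j *)
Definition newedge (k : nat) :=
  { ij : nat * nat | (fst ij < k)%nat /\ (snd ij < k)%nat /\ fst ij <> snd ij }.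

Definition Eplus (E : Type) (k : nat) := (E + newedge k)%type.

Definition tailp {V E : Type} (tail : E -> V) (k : nat) (f : Eplus E k) : Vplus V k :=
  match f with
  | inl e => inl (tail e)
  | inr ij => inr (exist _ (fst (proj1_sig ij)) (proj1 (proj2_sig ij)))
  end.

Definition headp {V E : Type} (head : E -> V) (k : nat) (s : nat -> V)
  (f : Eplus E k) : Vplus V k :=
  match f with
  | inl e => inl (head e)
  | inr ij => inl (s (snd (proj1_sig ij)))
  end.

Definition xplus {E : Type} (k : nat) (x : E -> R) (f : Eplus E k) : R :=
  match f with
  | inl e => x e
  | inr _ => 0
  end.

Definition ballp {V E : Type} (tail head : E -> V) (k : nat) (s : nat -> V) (x : E -> R)
  (a : Vplus V k) (r : R) (u : Vplus V k) : Prop :=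
  in_ball (tailp tail k) (headp head k s) (xplus k x) a r u.

(* e in C(theta) = U_i delta^+(B(t_i, theta)), for an original edge e of G *)
Definition in_cut {V E : Type} (tail head : E -> V) (k : nat) (s : nat -> V) (x : E -> R)
  (theta : R) (e : E) : Prop :=
  exists (i : term k),
    ballp tail head k s x (inr i) theta (inl (tail e)) /\
    ~ ballp tail head k s x (inr i) theta (inl (head e)).

Definition cut_ind {V E : Type} (tail head : E -> V) (k : nat) (s : nat -> V) (x : E -> R)
  (e : E) (theta : R) : R :=
  if excluded_middle_informative (in_cut tail head k s x theta e) then 1 else 0.

(* Main.v *)
Require Import Defs.
From Stdlib Require Import Reals List Classical ClassicalEpsilon Lra Lia ProofIrrelevance.
From Coquelicot Require Import Coquelicot.
Open Scope R_scope.

Lemma plen_app {F} (l : F -> R) p q : plen l (p ++ q) = plen l p + plen l q.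
Proof. induction p; simpl; [ring| rewrite IHp; ring]. Qed.

Lemma plen_nonneg {F} (l:F->R) (hl: forall f, 0 <= l f) p : 0 <= plen l p.
Proof. induction p; simpl; [lra| specialize (hl a); lra]. Qed.

Lemma walk_app {W F} (tl hd : F -> W) a b c p q :
  is_walk tl hd a b p -> is_walk tl hd b c q -> is_walk tl hd a c (p ++ q).
Proof. revert a; induction p; simpl; intros a0 H1 H2. subst; auto. destruct H1; split; auto. Qed.

Lemma walk_end_in {W F} (tl hd : F -> W) a b p : is_walk tl hd a b p -> In b (a :: map hd p).
Proof. revert a; induction p; simpl; intros a0 H. left; auto. destruct H as [_ H]. right. apply IHp in H. exact H. Qed.

Lemma walk_split {W F} (tl hd : F -> W) a b p v :
  is_walk tl hd a b p -> In v (map hd p) ->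
  exists q1 q2, p = q1 ++ q2 /\ is_walk tl hd a v q1 /\ is_walk tl hd v b q2.
Proof.
  revert a; induction p as [|f p IH]; simpl; intros a0 H Hin. contradiction.
  destruct H as [Ht H]. destruct Hin as [Hv|Hin].
  - exists (f :: nil), p. simpl. subst v. repeat split; auto.
  - destruct (IH _ H Hin) as (q1 & q2 & E & H1 & H2). exists (f :: q1), q2. subst p. simpl. repeat split; auto.
Qed.

Lemma NoDup_tail_from {A} (L1 L2 : list A) v : NoDup (L1 ++ L2) -> In v L1 -> NoDup (v :: L2).
Proof.
  induction L1 as [|y L1 IH]; simpl; intros H Hin. contradiction.
  inversion H; subst. destruct Hin as [E|Hin].
  - subst. constructor. intro. apply H2. apply in_or_app; auto. eapply NoDup_app_remove_l; eauto.
  - apply IH; auto.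
Qed.

Lemma walk_to_path {W F} (tl hd : F -> W) (l : F -> R) (hl : forall f, 0 <= l f) a b p :
  is_walk tl hd a b p -> exists q, is_path tl hd a b q /\ plen l q <= plen l p.
Proof.
  revert a; induction p as [|f p IH]; intros a0 H.
  - exists nil. simpl in H. split. split. simpl; auto. constructor. simpl; tauto. constructor. simpl; lra.
  - simpl in H. destruct H as [Ht H]. destruct (IH _ H) as (q & [Hq Hnd] & Hle).
    assert (Hf := hl f).
    destruct (classic (In a0 (hd f :: map hd q))) as [Hin|Hnin].
    + destruct Hin as [Heq|Hin].
      * exists q. split. split. rewrite <- Heq; auto. rewrite <- Heq; auto. simpl; lra.
      * destruct (walk_split _ _ _ _ _ _ Hq Hin) as (q1 & q2 & E & H1 & H2). exists q2. split. split; auto.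
        apply NoDup_tail_from with (L1 := hd f :: map hd q1). subst q. rewrite map_app in Hnd. exact Hnd.
        eapply walk_end_in; eauto.
        subst q. rewrite plen_app in Hle. assert (H0 := plen_nonneg l hl q1). simpl. lra.
    + exists (f :: q). split. split. simpl; split; auto. simpl. constructor; auto. simpl; lra.
Qed.

Fixpoint words {F} (L : list F) (n : nat) : list (list F) :=
  match n with O => nil :: nil | S n' => nil :: flat_map (fun e => map (cons e) (words L n')) L end.

Lemma in_words {F} (L : list F) n p : (forall e, In e p -> In e L) -> (length p <= n)%nat -> In p (words L n).
Proof.
  revert p; induction n; intros p H1 H2; destruct p as [|f p]; simpl in *.
  left; auto. lia. left; auto.
  right. apply in_flat_map. exists f. split. apply H1; auto. apply in_map. apply IHn. intros; apply H1; auto. lia.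
Qed.

Lemma path_len {W F} (tl hd : F -> W) (lW : list W) a b p :
  (forall f, In (hd f) lW) -> is_path tl hd a b p -> (length p <= length lW)%nat.
Proof.
  intros HW [_ Hnd]. inversion Hnd; subst. rewrite <- (length_map hd p).
  apply NoDup_incl_length; auto. intros y Hy. apply in_map_iff in Hy. destruct Hy as [f [<- _]]. apply HW.
Qed.

Lemma list_min {T} (C : list T) (P : T -> Prop) (g : T -> R) :
  (exists c, In c C /\ P c) -> exists c, In c C /\ P c /\ forall c', In c' C -> P c' -> g c <= g c'.
Proof.
  induction C as [|c0 C IH]; intros [c [Hin Hc]]. destruct Hin.
  destruct (classic (exists c, In c C /\ P c)) as [Hex|Hnex].
  - destruct (IH Hex) as (m & Hm1 & Hm2 & Hm3).
    destruct (classic (P c0)) as [Hp|Hnp].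
    + destruct (Rle_dec (g c0) (g m)).
      * exists c0. split. left; auto. split; auto. intros c' [E|Hc'] Hpc'. subst; lra. specialize (Hm3 c' Hc' Hpc'); lra.
      * exists m. split. right; auto. split; auto. intros c' [E|Hc'] Hpc'. subst; lra. auto.
    + exists m. split. right; auto. split; auto. intros c' [E|Hc'] Hpc'. subst; contradiction. auto.
  - exists c0. destruct Hin as [E|Hin].
    + subst. split. left; auto. split; auto. intros c' [E|Hc'] Hpc'. subst; lra. exfalso; apply Hnex; eauto.
    + exfalso; apply Hnex; eauto.
Qed.

Lemma dist_exists {W F} (tl hd : F -> W) (l : F -> R) (C : list (list F)) a b :
  (forall p, is_path tl hd a b p -> In p C) ->
  (exists p, is_path tl hd a b p) -> exists m, is_dist tl hd l a b m.
Proof.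
  intros HC [p Hp]. destruct (list_min C (is_path tl hd a b) (plen l)) as (q & Hq1 & Hq2 & Hq3).
  exists p; auto.
  exists (plen l q). split. exists q; auto. intros p' Hp'. apply Hq3; auto.
Qed.

Lemma dist_unique {W F} (tl hd : F -> W) (l : F -> R) a b m1 m2 :
  is_dist tl hd l a b m1 -> is_dist tl hd l a b m2 -> m1 = m2.
Proof.
  intros [[p1 [Hp1 E1]] H1] [[p2 [Hp2 E2]] H2]. specialize (H1 p2 Hp2). specialize (H2 p1 Hp1). lra.
Qed.

Lemma pw_int (L : list R) : forall (f : R -> R) a b, a <= b ->
  (forall y z, a < y -> y <= z -> z < b -> (forall p, In p L -> ~ (y <= p <= z)) -> f y = f z) ->
  ex_RInt f a b.
Proof.
  induction L as [|c L IH]; intros f a b Hab H.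
  - destruct (Req_dec a b) as [E|Hne]. subst; apply ex_RInt_point.
    apply ex_RInt_ext with (f := fun _ => f ((a+b)/2)). 2: apply ex_RInt_const.
    rewrite Rmin_left by lra. rewrite Rmax_right by lra. intros t Ht.
    destruct (Rle_dec t ((a+b)/2)).
    + symmetry. apply H; try lra. intros p [].
    + apply H; try lra. intros p [].
  - destruct (Rlt_dec a c) as [Hac|Hac]; [destruct (Rlt_dec c b) as [Hcb|Hcb]|].
    + apply ex_RInt_Chasles with c.
      * apply IH; [lra|]. intros y z H1 H2 H3 Hn; apply H; try lra.
        intros p [E|Hp]; [subst; lra| apply Hn; auto].
      * apply IH; [lra|]. intros y z H1 H2 H3 Hn; apply H; try lra.
        intros p [E|Hp]; [subst; lra| apply Hn; auto].
    + apply IH; auto. intros y z H1 H2 H3 Hn; apply H; try lra; intros p [E|Hp]; [subst; lra| apply Hn; auto].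
    + apply IH; auto. intros y z H1 H2 H3 Hn; apply H; try lra; intros p [E|Hp]; [subst; lra| apply Hn; auto].
Qed.

Ltac mm := unfold Rmax, Rmin in *; repeat match goal with |- context [Rle_dec ?x ?y] => destruct (Rle_dec x y) end.

Definition ind (a c t : R) : R := if Rle_dec a t then if Rlt_dec t c then 1 else 0 else 0.

Lemma ind_nonneg a c t : 0 <= ind a c t.
Proof. unfold ind; destruct (Rle_dec a t); [destruct (Rlt_dec t c)|]; lra. Qed.

Lemma ind_int a c u v : u <= v -> ex_RInt (ind a c) u v.
Proof.
  intros Huv. apply (pw_int (a :: c :: nil)); [lra|]. intros y z H1 H2 H3 Hn.
  assert (Ha := Hn a (or_introl eq_refl)). assert (Hc := Hn c (or_intror (or_introl eq_refl))).
  unfold ind. destruct (Rle_dec a y), (Rle_dec a z), (Rlt_dec y c), (Rlt_dec z c); auto;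
  first [lra | exfalso; apply Ha; split; lra | exfalso; apply Hc; split; lra].
Qed.

Lemma RInt_cst0 u v : RInt (fun _ => 0) u v = (v - u) * 0.
Proof. rewrite RInt_const. reflexivity. Qed.

Lemma ind_RInt a c : RInt (ind a c) 0 1 <= Rmax 0 (c - a).
Proof.
  assert (Hm : forall u v, (Rmin u v = u /\ u <= v) \/ (Rmin u v = v /\ v <= u)).
  { intros u v. unfold Rmin. destruct (Rle_dec u v); [left|right]; split; lra. }
  assert (HM : forall u v, (Rmax u v = v /\ u <= v) \/ (Rmax u v = u /\ v <= u)).
  { intros u v. unfold Rmax. destruct (Rle_dec u v); [left|right]; split; lra. }
  set (a' := Rmax 0 (Rmin a 1)). set (c' := Rmax a' (Rmin c 1)).
  assert (Fa : (a' = 0 /\ a <= 0) \/ (a' = a /\ 0 <= a <= 1) \/ (a' = 1 /\ 1 <= a)).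
  { unfold a'. destruct (Hm a 1) as [[E1 F1]|[E1 F1]]; rewrite E1;
    match goal with |- context [Rmax ?u ?v] => destruct (HM u v) as [[E2 F2]|[E2 F2]]; rewrite E2 end;
    first [left; lra | right; left; lra | right; right; lra]. }
  assert (Fc : (c' = a' /\ c <= a') \/ (c' = c /\ a' <= c <= 1) \/ (c' = 1 /\ 1 <= c)).
  { assert (a' <= 1) by lra. unfold c'. destruct (Hm c 1) as [[E1 F1]|[E1 F1]]; rewrite E1;
    match goal with |- context [Rmax ?u ?v] => destruct (HM u v) as [[E2 F2]|[E2 F2]]; rewrite E2 end;
    first [left; lra | right; left; lra | right; right; lra]. }
  assert (H01 : 0 <= a' <= 1) by lra. assert (H02 : a' <= c' <= 1) by lra.
  rewrite <- (RInt_Chasles (ind a c) 0 a' 1) by (apply ind_int; lra).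
  rewrite <- (RInt_Chasles (ind a c) a' c' 1) by (apply ind_int; lra).
  rewrite (RInt_ext (ind a c) (fun _ => 0) 0 a').
  2:{ rewrite Rmin_left by lra. rewrite Rmax_right by lra. intros t Ht. unfold ind.
      destruct (Rle_dec a t); [destruct (Rlt_dec t c)|]; auto; lra. }
  rewrite (RInt_ext (ind a c) (fun _ => 1) a' c').
  2:{ rewrite Rmin_left by lra. rewrite Rmax_right by lra. intros t Ht. unfold ind.
      destruct (Rle_dec a t); [destruct (Rlt_dec t c)|]; auto; lra. }
  rewrite (RInt_ext (ind a c) (fun _ => 0) c' 1).
  2:{ rewrite Rmin_left by lra. rewrite Rmax_right by lra. intros t Ht. unfold ind.
      destruct (Rle_dec a t); [destruct (Rlt_dec t c)|]; auto; lra. }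
  rewrite !RInt_const. unfold plus, scal; simpl. unfold mult; simpl.
  destruct (HM 0 (c - a)) as [[E3 F3]|[E3 F3]]; rewrite E3; lra.
Qed.

Lemma term_eq k (i j : term k) : proj1_sig i = proj1_sig j -> i = j.
Proof. destruct i, j; simpl; intros; subst; f_equal; apply proof_irrelevance. Qed.

Lemma term_fin k : exists lT : list (term k), forall i, In i lT.
Proof.
  exists (flat_map (fun n => match Compare_dec.lt_dec n k with left H => exist _ n H :: nil | right _ => nil end) (seq 0 k)).
  intros [n H]. apply in_flat_map. exists n. split. apply in_seq; lia.
  destruct (Compare_dec.lt_dec n k); [left; apply term_eq; reflexivity | contradiction].
Qed.

Lemma newedge_fin k : exists L : list (newedge k), forall f, In f L.
Proof.
  exists (flat_map (fun ij => match excluded_middle_informative ((fst ij < k)%nat /\ (snd ij < k)%nat /\ fst ij <> snd ij) with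
     left H => exist _ ij H :: nil | right _ => nil end) (list_prod (seq 0 k) (seq 0 k))).
  intros [[i j] H]. apply in_flat_map. exists (i, j). split.
  apply in_prod; apply in_seq; simpl in H; lia.
  destruct excluded_middle_informative; [left; f_equal; apply proof_irrelevance | contradiction].
Qed.

Lemma cand (V E : Type) (tail head : E -> V) k s
  (finV : exists lV : list V, forall v, In v lV)
  (finE : exists lE : list E, forall e, In e lE) :
  exists C : list (list (Defs.Eplus E k)), forall a b p, is_path (tailp tail k) (headp head k s) a b p -> In p C.
Proof.
  destruct finV as [lV HV], finE as [lE HE], (newedge_fin k) as [lN HN].
  exists (words (map inl lE ++ map inr lN) (length (map (@inl V (term k)) lV))).
  intros a b p Hp. apply in_words.
  - intros f _. destruct f; apply in_or_app; [left|right]; apply in_map; auto.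
  - eapply path_len; eauto. intros f; destruct f; simpl; apply in_map; auto.
Qed.

Lemma redirect (V E : Type) (tail head : E -> V) k s (x : E -> R) (i0 : term k) u p :
  is_path (tailp tail k) (headp head k s) (inr i0) (inl u) p ->
  exists j, (j < k)%nat /\ j <> proj1_sig i0 /\
   forall i' : term k, proj1_sig i' <> j ->
     exists p', is_path (tailp tail k) (headp head k s) (inr i') (inl u) p' /\
                plen (xplus k x) p' = plen (xplus k x) p.
Proof.
  intros [Hw Hnd]. destruct p as [|f p]. simpl in Hw. discriminate.
  destruct f as [e|ij]. simpl in Hw. destruct Hw as [Ht _]. discriminate.
  destruct ij as [[i j] [Hi [Hj Hij]]]. simpl in Hw. destruct Hw as [Ht Hw].
  injection Ht as Ht. subst i0. simpl in *.
  exists j. split; auto. split; [lia|].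
  intros [i' Hi'] Hne. simpl in Hne.
  exists (inr (exist _ (i', j) (conj Hi' (conj Hj Hne))) :: p). split. split.
  - simpl. split; [f_equal; apply term_eq; reflexivity|exact Hw].
  - simpl. inversion Hnd as [|? ? H1 H2]. apply NoDup_cons; [|exact H2]. intro Hin. destruct Hin as [Hq|Hin]. discriminate.
    apply in_map_iff in Hin. destruct Hin as [f [Hf _]]. destruct f; discriminate.
  - simpl. reflexivity.
Qed.

Lemma two_values (V E : Type) (tail head : E -> V) k s (x : E -> R)
  (C : list (list (Defs.Eplus E k)))
  (HC : forall a b p, is_path (tailp tail k) (headp head k s) a b p -> In p C)
  (lT : list (term k)) (HT : forall i, In i lT) u :
  exists a b, forall i m, is_dist (tailp tail k) (headp head k s) (xplus k x) (inr i) (inl u) m -> m = a \/ m = b.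
Proof.
  destruct (classic (exists c, In c (list_prod lT C) /\
     is_path (tailp tail k) (headp head k s) (inr (fst c)) (inl u) (snd c))) as [Hex|Hno].
  - destruct (list_min _ _ (fun c => plen (xplus k x) (snd c)) Hex) as ([i0 p0] & Hin0 & Hp0 & Hmin).
    simpl in Hp0.
    destruct (redirect V E tail head k s x i0 u p0 Hp0) as (j & Hj & Hji & Hred).
    assert (Hcom : forall i m, proj1_sig i <> j ->
       is_dist (tailp tail k) (headp head k s) (xplus k x) (inr i) (inl u) m -> m = plen (xplus k x) p0).
    { intros i m Hne Hm. destruct (Hred i Hne) as (p' & Hp' & Ep').
      destruct Hm as [[q [Hq Eq]] Hall]. specialize (Hall p' Hp').
      assert (Hq2 := Hmin (i, q) (in_prod _ _ _ _ (HT i) (HC _ _ _ Hq)) Hq). simpl in Hq2. lra. }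
    destruct (classic (exists i m, proj1_sig i = j /\
       is_dist (tailp tail k) (headp head k s) (xplus k x) (inr i) (inl u) m)) as [[ij [mj [Eij Hmj]]]|Hnj].
    + exists (plen (xplus k x) p0), mj. intros i m Hm.
      destruct (Nat.eq_dec (proj1_sig i) j) as [Heq|Hne].
      * right. assert (i = ij) by (apply term_eq; congruence). subst. eapply dist_unique; eauto.
      * left. eapply Hcom; eauto.
    + exists (plen (xplus k x) p0), 0. intros i m Hm.
      destruct (Nat.eq_dec (proj1_sig i) j) as [Heq|Hne].
      * exfalso; apply Hnj; eauto.
      * left. eapply Hcom; eauto.
  - exists 0, 0. intros i m [[q [Hq _]] _]. exfalso. apply Hno. exists (i,q). split.
    apply in_prod; auto. eapply HC; eauto. simpl; auto.
Qed.

Lemma tri (V E : Type) (tail head : E -> V) k s (x : E -> R)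
  (C : list (list (Defs.Eplus E k)))
  (HC : forall a b p, is_path (tailp tail k) (headp head k s) a b p -> In p C)
  (hx0 : forall e, 0 <= x e) i e m :
  is_dist (tailp tail k) (headp head k s) (xplus k x) (inr i) (inl (tail e)) m ->
  exists m', is_dist (tailp tail k) (headp head k s) (xplus k x) (inr i) (inl (head e)) m' /\ m' <= m + x e.
Proof.
  intros Hd. destruct Hd as [[p [[Hw _] Ep]] _].
  assert (Hw2 : is_walk (tailp tail k) (headp head k s) (inr i) (inl (head e)) (p ++ inl e :: nil)).
  { eapply walk_app; eauto. simpl. split; reflexivity. }
  assert (hl : forall f, 0 <= xplus k x f) by (intros [f|f]; simpl; [auto|lra]).
  destruct (walk_to_path _ _ _ hl _ _ _ Hw2) as (q & Hq & Hle).
  destruct (dist_exists _ _ (xplus k x) C _ _ (HC _ _) (ex_intro _ q Hq)) as [m' Hm'].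
  exists m'. split; auto. destruct Hm' as [_ Hall]. specialize (Hall q Hq).
  rewrite plen_app in Hle. simpl in Hle. lra.
Qed.

Lemma ball_iff (V E : Type) (tail head : E -> V) k s (x : E -> R)
  (C : list (list (Defs.Eplus E k)))
  (HC : forall a b p, is_path (tailp tail k) (headp head k s) a b p -> In p C) a v y z :
  y <= z -> (forall p, In p (map (plen (xplus k x)) C) -> ~ (y <= p <= z)) ->
  (ballp tail head k s x a y v <-> ballp tail head k s x a z v).
Proof.
  intros Hyz Hn. unfold ballp, in_ball. split; intros [m [Hm Hle]]; exists m; split; auto.
  lra. destruct (Rle_dec m y) as [r|r]; auto. exfalso. destruct Hm as [[p [Hp Ep]] _]. apply (Hn m).
  rewrite <- Ep. apply in_map. eapply HC; eauto. lra.
Qed.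

Theorem mainTheorem3
  (V E : Type) (tail head : E -> V)
  (finV : exists lV : list V, forall v, In v lV)
  (finE : exists lE : list E, forall e, In e lE)
  (k : nat) (hk : (2 <= k)%nat) (s : nat -> V)
  (s_distinct : forall i j, (i < k)%nat -> (j < k)%nat -> s i = s j -> i = j)
  (x : E -> R) (hx : feasible tail head k s x) :
  forall e : E,
    exists pr : Riemann_integrable (cut_ind tail head k s x e) 0 1,
      RiemannInt pr <= 2 * x e.
Proof.
  intros e. destruct hx as [hx0 _].
  destruct (cand V E tail head k s finV finE) as [C HC].
  destruct (term_fin k) as [lT HT].
  assert (Hint : ex_RInt (cut_ind tail head k s x e) 0 1).
  { apply (pw_int (map (plen (xplus k x)) C)); [lra|]. intros y z _ Hyz _ Hn.
    assert (Hiff : in_cut tail head k s x y e <-> in_cut tail head k s x z e).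
    { unfold in_cut. split; intros [i [H1 H2]]; exists i; split.
      - apply (ball_iff V E tail head k s x C HC _ _ y z Hyz Hn); auto.
      - intro H3. apply H2. apply (ball_iff V E tail head k s x C HC _ _ y z Hyz Hn); auto.
      - apply (ball_iff V E tail head k s x C HC _ _ y z Hyz Hn); auto.
      - intro H3. apply H2. apply (ball_iff V E tail head k s x C HC _ _ y z Hyz Hn); auto. }
    unfold cut_ind. destruct (excluded_middle_informative (in_cut tail head k s x y e)),
      (excluded_middle_informative (in_cut tail head k s x z e)); first [reflexivity | exfalso; tauto]. }
  exists (ex_RInt_Reals_0 _ _ _ Hint). rewrite <- RInt_Reals.
  destruct (two_values V E tail head k s x C HC lT HT (tail e)) as (a & b & Hab).
  assert (Hpt : forall t, cut_ind tail head k s x e t <= ind a (a + x e) t + ind b (b + x e) t).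
  { intros t. unfold cut_ind. destruct (excluded_middle_informative (in_cut tail head k s x t e)) as [Hc|Hc].
    - destruct Hc as [i [H1 H2]]. unfold ballp, in_ball in H1. destruct H1 as [m [Hm Hmt]].
      destruct (tri V E tail head k s x C HC hx0 i e m Hm) as [m' [Hm' Hle]].
      assert (Ht : t < m + x e).
      { destruct (Rlt_dec t (m + x e)) as [r|r]; auto. exfalso. apply H2. exists m'. split; auto. lra. }
      destruct (Hab i m Hm) as [Ea|Eb]; subst m.
      + assert (Hb := ind_nonneg b (b + x e) t). unfold ind at 1.
        destruct (Rle_dec a t); [destruct (Rlt_dec t (a + x e))|]; lra.
      + assert (Ha := ind_nonneg a (a + x e) t). unfold ind at 2.
        destruct (Rle_dec b t); [destruct (Rlt_dec t (b + x e))|]; lra.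
    - assert (Ha := ind_nonneg a (a + x e) t). assert (Hb := ind_nonneg b (b + x e) t). lra. }
  assert (Hia := ind_int a (a + x e) 0 1 ltac:(lra)).
  assert (Hib := ind_int b (b + x e) 0 1 ltac:(lra)).
  assert (Hs : ex_RInt (fun t => ind a (a + x e) t + ind b (b + x e) t) 0 1).
  { apply (ex_RInt_plus (ind a (a + x e)) (ind b (b + x e))); auto. }
  apply Rle_trans with (RInt (fun t => ind a (a + x e) t + ind b (b + x e) t) 0 1).
  { apply RInt_le; auto. lra. }
  assert (E1 : RInt (fun t => ind a (a + x e) t + ind b (b + x e) t) 0 1
     = RInt (ind a (a + x e)) 0 1 + RInt (ind b (b + x e)) 0 1).
  { apply (RInt_plus (ind a (a + x e)) (ind b (b + x e))); auto. }
  rewrite E1.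
  assert (B1 := ind_RInt a (a + x e)). assert (B2 := ind_RInt b (b + x e)).
  replace (a + x e - a) with (x e) in B1 by ring. replace (b + x e - b) with (x e) in B2 by ring.
  rewrite Rmax_right in B1, B2 by apply hx0. lra.
Qed.
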